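(* Let $m\ge1$ and $l\ge1$ be integers. For every $k=0,1,\dots,m$, \[ \left(\prod_{\substack{p\le m\\ p\text{ prime}}}p^{\lfloor m/p\rfloor v_p(l!)-v_p(l)}\right)^{-1}B^*_{k,0}(t)\in\mathbb{Z}[t]. \]
   Context: $v_p$ is the $p$-adic valuation. For $k=0,\dots,m$ let $l^{(k)}_h=l$ for $h\ne k$ and $l^{(k)}_k=l-1$ ($h=0,\dots,m$), and $L=(m+1)l-1$. For $j,k\in\{0,\dots,m\}$ define $\sigma^{(k,j)}_i$ by $\prod_{h=0}^m(h-j-w)^{l^{(k)}_h}=\sum_{i=0}^L\sigma^{(k,j)}_iw^i$, and \[ B^*_{k,j}(t)=\frac{1}{(l-1)!}\sum_{i=0}^{L}t^{L-i}\,i!\,\sigma^{(k,j)}_i \] (equivalently $B^*_{k,j}(t)=\frac{t^{L+1}}{(l-1)!}\int_0^\infty e^{-yt}\prod_{h=0}^m(h-j-y)^{l^{(k)}_h}\,dy$ for $t>0$). *)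

(* Defs.v *)
From HB Require Import structures.
From mathcomp Require Import all_boot all_order all_algebra.
Set Implicit Arguments. Unset Strict Implicit. Unset Printing Implicit Defensive.
Import Order.TTheory GRing.Theory Num.Theory.
Local Open Scope ring_scope.

Definition lexp (l k h : nat) : nat := if h == k then (l - 1)%N else l.

Definition Lpar (m l : nat) : nat := ((m.+1 * l) - 1)%N.

Definition sigma_poly (m l k j : nat) : {poly rat} :=
  \prod_(h < m.+1) ((h%:R - j%:R)%:P - 'X) ^+ lexp l k h.

Definition sigma (m l k j i : nat) : rat := (sigma_poly m l k j)`_i.

Definition Bstar (m l k j : nat) : {poly rat} :=
  ((l - 1)`!%:R)^-1 *:
    \sum_(i < (Lpar m l).+1) ((i`!)%:R * sigma m l k j i) *: 'X^(Lpar m l - i).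

Definition Dfac (m l : nat) : rat :=
  \prod_(p < m.+1 | prime p)
     (p%:R : rat) ^ ((m %/ p * logn p l`!)%:Z - (logn p l)%:Z).

(* Main.v *)
Require Import Defs.
From HB Require Import structures.
From mathcomp Require Import all_boot all_order all_algebra.
From mathcomp Require Import zify ring.
Import Order.TTheory GRing.Theory Num.Theory.


Lemma legendre_bound p n K : (1 < p)%N ->
  (\sum_(1 <= k < K.+1) n %/ p ^ k + n %/ p ^ K <= n)%N.
Proof.
move=> p1; elim: K => [|K IH]; first by rewrite big_geq // expn0 divn1.
rewrite big_nat_recr //=.
have e : n %/ p ^ K.+1 = (n %/ p ^ K) %/ p by rewrite expnSr divnMA.
have h2 : (2 * ((n %/ p ^ K) %/ p) <= n %/ p ^ K)%N.
  apply: leq_trans (leq_divM (n %/ p ^ K) p).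
  by rewrite mulnC leq_mul2l p1 orbT.
rewrite e; lia.
Qed.

Lemma logn_fact_le p n : prime p -> (logn p n`! <= n)%N.
Proof.
move=> pp; rewrite logn_fact //.
apply: leq_trans (@legendre_bound p n n (prime_gt1 pp)); exact: leq_addr.
Qed.

Definition Gf (n h : nat) : nat := \big[gcdn/0]_(j < n.+1) (n ^_ j * h ^ (n - j)).

Lemma Gf_dvd n h j : (Gf n h %| n ^_ j * h ^ (n - j))%N.
Proof.
case: (leqP j n) => jn.
  by apply: (biggcdn_inf (Ordinal (jn : (j < n.+1)%N))).
by rewrite ffact_small // mul0n dvdn0.
Qed.

Lemma Gf_gt0 n h : (0 < Gf n h)%N.
Proof.
have := Gf_dvd n h n; rewrite subnn expn0 muln1 ffactnn.
case: (posnP (Gf n h)) => [->|//]; rewrite dvd0n => /eqP e.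
by have := fact_gt0 n; rewrite e.
Qed.

Lemma Gf_p p n h : prime p -> (p %| h)%N -> (p ^ logn p n`! %| Gf n h)%N.
Proof.
move=> pp ph; apply/dvdn_biggcdP => [[j /= jn]] _.
rewrite ltnS in jn.
rewrite -(ffact_fact jn) lognM ?fact_gt0 ?ffact_gt0 // expnD.
apply: dvdn_mul; first exact: pfactor_dvdnn.
apply: (@dvdn_trans (p ^ (n - j))).
  by rewrite dvdn_exp2l // logn_fact_le.
exact: dvdn_exp2r.
Qed.

Lemma Gf_0 n : (n`! %| Gf n 0)%N.
Proof.
apply/dvdn_biggcdP => [[j /= jn]] _.
rewrite ltnS in jn.
case: (ltngtP j n) jn => // [jn _|-> _].
  by rewrite exp0n ?subn_gt0 // muln0 dvdn0.
by rewrite subnn expn0 muln1 ffactnn.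
Qed.

Lemma sum_mult p m : (0 < p)%N -> (\sum_(h < m) (p %| h.+1) = m %/ p)%N.
Proof.
move=> p0; elim: m => [|m IH]; first by rewrite big_ord0 div0n.
by rewrite big_ord_recr /= IH divnS // addnC.
Qed.

Definition Dn (m l : nat) : nat :=
  \prod_(p < m.+1 | prime p) p ^ (m %/ p * logn p l`! - logn p l).

Definition Tn (m l : nat) : nat := ((l - 1)`! * Dn m l)%N.

Lemma Dn_gt0 m l : (0 < Dn m l)%N.
Proof. by apply: prodn_cond_gt0 => p pp; rewrite expn_gt0 prime_gt0. Qed.

Lemma Tn_gt0 m l : (0 < Tn m l)%N.
Proof. by rewrite muln_gt0 fact_gt0 Dn_gt0. Qed.

Lemma logn_prod p (I : Type) (r : seq I) (P : pred I) (F : I -> nat) :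
  (forall i, P i -> 0 < F i)%N ->
  logn p (\prod_(i <- r | P i) F i) = (\sum_(i <- r | P i) logn p (F i))%N.
Proof.
move=> FP; elim: r => [|a r IH]; first by rewrite !big_nil logn1.
rewrite !big_cons; case: ifP => Pa //.
by rewrite lognM ?FP ?IH // prodn_cond_gt0.
Qed.

Lemma sum_eq_ind (n q c : nat) : (\sum_(i < n) (i == q :> nat) * c = (q < n) * c)%N.
Proof.
elim: n => [|n IH]; first by rewrite big_ord0.
rewrite big_ord_recr /= IH ltnS leq_eqVlt.
by case: (ltngtP q n) => [qn|qn|->]; rewrite ?eqxx /= ?orbT //= ?mul1n ?mul0n ?addn0 ?add0n ?(gtn_eqF qn) ?(ltn_eqF qn) //= ?eqxx; lia.
Qed.

Lemma logn_Dn_le q m l : prime q ->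
  (logn q (Dn m l) <= m %/ q * logn q l`! - logn q l)%N.
Proof.
move=> qp; rewrite /Dn logn_prod; last by move=> p pp; rewrite expn_gt0 prime_gt0.
apply: (@leq_trans (\sum_(p < m.+1) (p == q :> nat) * (m %/ q * logn q l`! - logn q l))).
  rewrite big_mkcond /=; apply: leq_sum => p _.
  case: ifP => pp //; rewrite lognX (logn_prime _ pp).
  by case: eqP => [->|]; rewrite ?eqxx ?muln1 ?mul1n ?muln0 //; case: eqP.

by rewrite sum_eq_ind; case: (q < m.+1)%N; rewrite ?mul1n ?mul0n.
Qed.

Lemma logn_fact_pred p l : (0 < l)%N ->
  (logn p (l - 1)`! + logn p l = logn p l`!)%N.
Proof.
case: l => // l _; rewrite subn1 /= factS lognM ?fact_gt0 //; lia.
Qed.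

Lemma Tn_dvd m l k : (1 <= l)%N -> (k <= m)%N ->
  (Tn m l %| \prod_(h < m.+1) Gf (lexp l k h) h)%N.
Proof.
move=> l1 km; apply/dvdn_partP => [|p]; first exact: Tn_gt0.
rewrite mem_primes => /and3P[pp _ _]; rewrite p_part.
pose e (h : nat) := if h == 0%N then logn p (lexp l k h)`!
                    else ((p %| h) * logn p (lexp l k h)`!)%N.
apply: (@dvdn_trans (p ^ (\sum_(h < m.+1) e h))).
  rewrite dvdn_exp2l //.
  have key : (logn p l`! + m %/ p * logn p l`! <= \sum_(h < m.+1) e h + logn p l)%N.
    have -> : (\sum_(h < m.+1) e h + logn p l =
               \sum_(h < m.+1) (e h + (h == k :> nat) * logn p l))%N.
      by rewrite big_split /= sum_eq_ind ltnS km mul1n.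
    have -> : (logn p l`! + m %/ p * logn p l`! =
               \sum_(h < m.+1) (if h == 0 :> nat then logn p l`!
                               else (p %| h) * logn p l`!))%N.
      rewrite big_ord_recl /= -sum_mult ?prime_gt0 // big_distrl /=.
      congr (_ + _)%N.
    apply: leq_sum => h _; rewrite /e /lexp.
    have := (@logn_fact_pred p l l1).
    case: (h == 0 :> nat); case: (h == k :> nat); case: (p %| h); rewrite /=; lia.
  rewrite /Tn lognM ?fact_gt0 ?Dn_gt0 //.
  have := logn_Dn_le p m l pp; have := (@logn_fact_pred p l l1).
  have : (logn p l <= logn p l`!)%N.
    by apply: dvdn_leq_log; rewrite ?fact_gt0 // dvdn_fact // l1 leqnn.
  move: key; generalize (m %/ p * logn p l`!)%N => c; lia.
rewrite expn_sum; elim/big_ind2: _ => // [x1 x2 y1 y2 *|h _].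
  exact: dvdn_mul.
rewrite /e; case: eqP => [h0|h0].
  by rewrite h0; apply: dvdn_trans (Gf_0 _); apply: pfactor_dvdnn.
case: (boolP (p %| h)) => ph; last by rewrite mul0n expn0 dvd1n.
by rewrite mul1n; apply: Gf_p.
Qed.

Local Open Scope ring_scope.

Definition good (c : nat) (Q : {poly rat}) :=
  forall i : nat, (i`!%:R * Q`_i) / c%:R \is a Num.int.

Lemma good_mul c1 c2 Q R : (0 < c1)%N -> (0 < c2)%N -> good c1 Q -> good c2 R ->
  good (c1 * c2) (Q * R).
Proof.
move=> h1 h2 gQ gR i.
rewrite coefM mulr_sumr mulr_suml; apply: rpred_sum => -[j /= ji] _.
rewrite ltnS in ji.
have -> : i`!%:R * (Q`_j * R`_(i - j)) / (c1 * c2)%:R =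
   'C(i, j)%:R * ((j`!%:R * Q`_j) / c1%:R) * (((i - j)`!%:R * R`_(i - j)) / c2%:R) :> rat.
  rewrite -(bin_fact ji) !natrM.
  have c1n : (c1%:R : rat) != 0 by rewrite pnatr_eq0 -lt0n.
  have c2n : (c2%:R : rat) != 0 by rewrite pnatr_eq0 -lt0n.
  by field; apply/andP; split.
by apply: rpredM; [apply: rpredM; [exact: rpred_nat | exact: gQ] | exact: gR].
Qed.

Lemma good_dvd c c' Q : (0 < c)%N -> (c' %| c)%N -> good c Q -> good c' Q.
Proof.
move=> c0 cc gQ i.
have c'0 : (0 < c')%N by apply: dvdn_gt0 cc.
have -> : (i`!%:R * Q`_i) / c'%:R = (i`!%:R * Q`_i) / c%:R * (c %/ c')%:R.
  rewrite natr_div // ?unitfE ?pnatr_eq0 -?lt0n //.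
  have c1n : (c%:R : rat) != 0 by rewrite pnatr_eq0 -lt0n.
  have c2n : (c'%:R : rat) != 0 by rewrite pnatr_eq0 -lt0n.
  by field; apply/andP; split.
by apply: rpredM; [exact: gQ | exact: rpred_nat].
Qed.

Lemma good1 : good 1 1.
Proof. by move=> i; rewrite coef1 divr1; apply: rpredM; exact: rpred_nat. Qed.

Lemma coef_fac (a : rat) n j :
  ((a%:P - 'X) ^+ n)`_j = if (j <= n)%N then 'C(n, j)%:R * a ^+ (n - j) * (-1) ^+ j else 0.
Proof.
rewrite exprDn coef_sum.
have E : forall i : 'I_n.+1, ((a%:P ^+ (n - i) * (- 'X) ^+ i) *+ 'C(n, i))`_j =
   ((j == i :> nat)%:R * (a ^+ (n - i) * (-1) ^+ i)) *+ 'C(n, i).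
  move=> i; have -> : a%:P ^+ (n - i) * (- 'X) ^+ i = (a ^+ (n - i) * (-1) ^+ i)%:P * 'X^i.
    by rewrite polyCM !rmorphXn /= rmorphN1 [(- 'X) ^+ i]exprNn; ring.
  by rewrite coefMn coefCM coefXn mulrC.
rewrite (eq_bigr _ (fun i _ => E i)).
case: leqP => jn.
  rewrite (bigD1 (Ordinal (jn : (j < n.+1)%N))) //= big1 ?addr0.
    by rewrite eqxx mul1r -mulr_natl mulrA.
  move=> i ij; rewrite (_ : (j == i :> nat) = false) ?mul0r ?mul0rn //.
  apply/negbTE; apply: contra ij => /eqP e; apply/eqP; apply: val_inj => /=; by rewrite e.
rewrite big1 // => i _.
rewrite (_ : (j == i :> nat) = false) ?mul0r ?mul0rn //.
apply/negbTE; apply: contraTneq jn => ->; rewrite -leqNgt -ltnS; exact: ltn_ord.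
Qed.

Lemma good_fac (h n : nat) : good (Gf n h) (((h%:R - 0%:R)%:P - 'X) ^+ n).
Proof.
move=> j; rewrite subr0 coef_fac.
case: leqP => jn; last by rewrite mulr0 mul0r; exact: rpred0.
have -> : j`!%:R * ('C(n, j)%:R * h%:R ^+ (n - j) * (-1) ^+ j) / (Gf n h)%:R
   = (n ^_ j * h ^ (n - j) %/ Gf n h)%:R * (-1) ^+ j :> rat.
  rewrite natr_div ?Gf_dvd // ?unitfE ?pnatr_eq0 -?lt0n ?Gf_gt0 //.
  rewrite natrM natrX -bin_ffact natrM.
  have gn : ((Gf n h)%:R : rat) != 0 by rewrite pnatr_eq0 -lt0n Gf_gt0.
  by field.
apply: rpredM; first exact: rpred_nat.
by apply: rpredX; apply: rpredN; apply: rpred1.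
Qed.

Lemma good_sigma m l k :
  good (\prod_(h < m.+1) Gf (lexp l k h) h) (sigma_poly m l k 0).
Proof.
rewrite /sigma_poly.
suff : (0 < \prod_(h < m.+1) Gf (lexp l k h) h)%N /\
       good (\prod_(h < m.+1) Gf (lexp l k h) h)
         (\prod_(h < m.+1) ((h%:R - 0%:R)%:P - 'X) ^+ lexp l k h) by case.
elim/big_ind2: _ => [|c1 Q c2 R [h1 g1] [h2 g2]|h _].
- by split => //; exact: good1.
- by split; [rewrite muln_gt0 h1 | apply: good_mul].
- by split; [exact: Gf_gt0 | exact: good_fac].
Qed.

Lemma Dfac_nat m l : (1 <= l)%N -> Dfac m l = (Dn m l)%:R.
Proof.
move=> l1; rewrite /Dfac /Dn natr_prod; apply: eq_bigr => p pp.
rewrite natrX subzn -?exprnP //.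
have p0 : (0 < p)%N by rewrite prime_gt0.
have : (0 < m %/ p)%N by rewrite divn_gt0 // -ltnS ltn_ord.
have : (logn p l <= logn p l`!)%N.
  by apply: dvdn_leq_log; rewrite ?fact_gt0 // dvdn_fact // l1 leqnn.
move: (m %/ p)%N (logn p l) (logn p l`!) => a b c; nia.
Qed.

Theorem theorem6p1 (m l : nat) (hm : (1 <= m)%N) (hl : (1 <= l)%N) (k : nat) (hk : (k <= m)%N) :
  forall i : nat, exists z : int, ((Dfac m l)^-1 *: Bstar m l k 0) `_ i = z%:~R.
Proof.
move=> i; apply/intrP.
have gT : good (Tn m l) (sigma_poly m l k 0).
  apply: good_dvd (good_sigma m l k).
    by apply: prodn_cond_gt0 => h _; exact: Gf_gt0.
  exact: Tn_dvd.
rewrite /Bstar Dfac_nat // !coefZ coef_sum mulrA -invfM -natrM mulr_sumr.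
apply: rpred_sum => j _.
rewrite coefZ coefXn mulrA.
apply: rpredM; last exact: rpred_nat.
rewrite mulrC mulnC; exact: (gT j).
Qed.
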